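(* Let $d\geq 3$ and let $n$ be an integer with $n\not\equiv -1\pmod d$. (a) If $0\neq W\subset A^n$ is an additive subgroup stable under $\Gamma_n(d)$, then $W\supseteq\lambda A^n$ for some non-zero $\lambda\in A$; in particular $W$ has finite index in $A^n$. (b) If $F\supseteq A$ is a field and $W_F\subseteq F^n$ is a non-zero $F$-subspace stable under $\rho_n(d)(B_{n+1})$, then $W_F=F^n$.
   Context: $A=\mathbb{Z}[q,q^{-1}]/(\Phi_d(q))$, where $\Phi_d$ is the $d$-th cyclotomic polynomial. $\rho_n(d):B_{n+1}\to GL_n(A)$ is the reduced Burau representation reduced mod $\Phi_d(q)$. It sends the generator $s_j$ to $T_j$, where $T_j(e_j)=-qe_j$, $T_j(e_{j-1})=e_{j-1}+qe_j$, $T_j(e_{j+1})=e_{j+1}+e_j$, and $T_j(e_k)=e_k$ for $|k-j|\geq 2$, with $e_1,\dots,e_n$ the standard basis. $\Gamma_n(d)$ denotes the image of $\rho_n(d)$. *)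

(* Defs.v *)
From HB Require Import structures.
From mathcomp Require Import all_boot all_order all_algebra all_field.
Set Implicit Arguments. Unset Strict Implicit. Unset Printing Implicit Defensive.
Import GRing.Theory.
Local Open Scope ring_scope.

(* A = Z[q,q^-1]/(Phi_d(q)), realised as Z[q]/(Phi_d(q)) (q is already a unit
   there since Phi_d(0) = +-1), using mathcomp's quotient ring {poly %/ h}. *)
Definition Aring (d : nat) := {poly %/ ('Phi_d : {poly int})}.

Definition qA (d : nat) : Aring d := 'qX.

(* Matrix of T_j (generic ring R, parameter q), acting on column vectors:
   column k is T_j(e_k).  Indices 1..n of the paper are 0..n-1 here. *)
Definition burauT (R : pzRingType) (n : nat) (q : R) (j : 'I_n) : 'M[R]_n :=
  \matrix_(i < n, k < n)
    if i == k then (if k == j then - q else 1)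
    else if i == j then
      (if (k.+1 == j :> nat) then q else if (k == j.+1 :> nat) then 1 else 0)
    else 0.

Definition rhoT (d n : nat) (j : 'I_n) : 'M[Aring d]_n := burauT (qA d) j.

Inductive Gamma (d n : nat) : 'M[Aring d]_n -> Prop :=
  | Gamma1 : Gamma 1%:M
  | GammaT (j : 'I_n) (g : 'M[Aring d]_n) :
      Gamma g -> Gamma (rhoT d j *m g)
  | GammaTinv (j : 'I_n) (M g : 'M[Aring d]_n) :
      M *m rhoT d j = 1%:M -> Gamma g -> Gamma (M *m g).

(* Main.v *)
Require Import Defs.
From HB Require Import structures.
From mathcomp Require Import all_boot all_order all_algebra all_field.
From Stdlib Require Import Lia.
From mathcomp Require Import zify ring.
Set Implicit Arguments. Unset Strict Implicit. Unset Printing Implicit Defensive.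
Import GRing.Theory Num.Theory.
Local Open Scope ring_scope.
Section Gen.
Variables (R : comNzRingType) (n : nat) (q : R).
Local Notation T := (@burauT R n q).
Local Notation e k := (delta_mx k 0 : 'cV[R]_n).

Lemma TmI_row (j : 'I_n) (v : 'cV[R]_n) :
  (T j - 1) *m v = (((T j - 1) *m v) j 0) *: e j.
Proof.
apply/matrixP => i l; rewrite (ord1 l) !mxE.
case: (eqVneq i j) => [->|nij]; first by rewrite eqxx mulr1.
rewrite mulr0 big1 // => k _; rewrite !mxE (negbTE nij).
case: (eqVneq i k) => [<-|nik]; last by rewrite subrr mul0r.
by rewrite (negbTE nij) subrr mul0r.
Qed.

Lemma TmI_e (j k : 'I_n) : (T j - 1) *m e k = (T j j k - (j == k)%:R) *: e j.
Proof.
rewrite TmI_row -colE !mxE //.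
Qed.

Lemma T_e_self (j : 'I_n) : T j *m e j = (- q) *: e j.
Proof.
apply/matrixP => i l; rewrite (ord1 l) -colE !mxE eqxx.
case: (eqVneq i j) => [_|nij]; first by rewrite mulr1.
by rewrite mulr0.
Qed.

Definition U (w : 'cV[R]_n) (m : nat) : R :=
  \sum_(k < n) (if (k : nat) == m then w k 0 else 0).

Lemma sumc (m : nat) (c : R) (g : 'I_n -> R) :
  \sum_(k < n) (if (k : nat) == m then c * g k else 0) =
  c * \sum_(k < n) (if (k : nat) == m then g k else 0).
Proof. by rewrite mulr_sumr; apply: eq_bigr => k _; case: ifP; rewrite ?mulr0. Qed.

Lemma U_ord (w : 'cV[R]_n) (j : 'I_n) : U w j = w j 0.
Proof.
rewrite /U (bigD1 j) //= eqxx big1 ?addr0 // => k Hk.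
by case: eqP => // /val_inj Ekj; rewrite Ekj eqxx in Hk.
Qed.

Lemma U_ge (w : 'cV[R]_n) m : (n <= m)%N -> U w m = 0.
Proof.
move=> Hm; rewrite /U big1 // => k _; case: eqP => // Ek.
by move: (ltn_ord k); rewrite Ek ltnNge Hm.
Qed.

Lemma phiE (w : 'cV[R]_n) (j : 'I_n) :
  ((T j - 1) *m w) j 0 =
  (- q - 1) * U w j + (if (j : nat) is j'.+1 then q * U w j' else 0) + U w j.+1.
Proof.
rewrite !mxE.
have E : forall k : 'I_n, (T j - 1) j k * w k 0 =
  (if (k : nat) == j then (- q - 1) * w k 0 else 0) +
  (if (k.+1 == j)%N then q * w k 0 else 0) +
  (if (k : nat) == j.+1 then w k 0 else 0).
  move=> k; rewrite !mxE eqxx.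
  case: (eqVneq j k) => [<-|njk].
    by rewrite eqxx (gtn_eqF (ltnSn _)) (ltn_eqF (ltnSn _)) !addr0.
  have nkj : ((k:nat) == j) = false by apply/negbTE; rewrite eq_sym; exact: njk.
  rewrite nkj subr0 add0r.
  case: ifP => H1; case: ifP => H2 //; first by move/eqP: H1 H2 => <- /eqP; lia.
  - by rewrite addr0.
  - by rewrite mul1r add0r.
  - by rewrite mul0r addr0.
under eq_bigr => k _ do rewrite E.
rewrite !big_split /= sumc; congr (_ + _ + _).
case: (nat_of_ord j) => [|j'].
  by rewrite big1.
rewrite (eq_bigr (fun k : 'I_n => if (k : nat) == j' then q * w k 0 else 0)).
  by rewrite sumc.
by move=> k _; rewrite eqSS.
Qed.
End Gen.



Lemma phi_inj (R : idomainType) (n : nat) (q : R) (w : 'cV[R]_n) :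
  (forall j : 'I_n, ((burauT q j - 1) *m w) j 0 = 0) ->
  \sum_(i < n.+1) q ^+ i != 0 -> w = 0.
Proof.
move=> H HS.
pose u := U w.
have Hn : forall m, (m < n)%N ->
   (- q - 1) * u m + q * (if m is m'.+1 then u m' else 0) + u m.+1 = 0.
  move=> m Hm; have := H (Ordinal Hm); rewrite phiE /=.
  by case: m Hm => [|m] Hm //=; rewrite mulr0.
have C1 : forall m, (m <= n)%N -> u m - (if m is m'.+1 then u m' else 0) = q ^+ m * u 0.
  elim => [|m IH] Hm; first by rewrite subr0 expr0 mul1r.
  have := Hn m Hm; rewrite exprS -mulrA -IH ?(ltnW Hm) // => E.
  set P := (if m is m'.+1 then u m' else 0) in E *.
  apply/eqP; rewrite -subr_eq0; apply/eqP.
  transitivity ((- q - 1) * u m + q * P + u m.+1); last exact: E.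
  clear E; move: P (u m) (u m.+1) => c a b; ring.
have C2 : forall m, (m <= n)%N -> u m = u 0 * \sum_(i < m.+1) q ^+ i.
  elim => [|m IH] Hm; first by rewrite big_ord1 expr0 mulr1.
  have := C1 m.+1 Hm => /= E.
  rewrite big_ord_recr /= mulrDr -IH ?(ltnW Hm) // (mulrC (u 0%N)) -E; clear E; move: (u m.+1) (u m) => a b; ring.
have u0 : u 0%N = 0.
  have := C2 n (leqnn n); rewrite /u U_ge // => /esym/eqP.
  by rewrite mulf_eq0 (negbTE HS) orbF => /eqP.
apply/matrixP => i l; rewrite (ord1 l) mxE -U_ord.
by rewrite -/u C2 ?u0 ?mul0r // ltnW.
Qed.

Lemma T_sup (R : comNzRingType) n (q : R) (j k : 'I_n) :
  (k : nat) = j.+1 -> burauT q j j k = 1.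
Proof.
move=> E; rewrite !mxE eqxx.
have -> : (j == k) = false by apply/negbTE; rewrite -val_eqE /= E; lia.
by rewrite E eqxx; case: eqP => //; lia.
Qed.

Lemma T_sub (R : comNzRingType) n (q : R) (j k : 'I_n) :
  (j : nat) = k.+1 -> burauT q j j k = q.
Proof.
move=> E; rewrite !mxE eqxx.
have -> : (j == k) = false by apply/negbTE; rewrite -val_eqE /= E; lia.
by rewrite E eqxx.
Qed.

Lemma spread (R : comNzRingType) n (q : R) (P : 'cV[R]_n.+1 -> Prop)
  (HT : forall (j : 'I_n.+1) v, P v -> P ((burauT q j - 1) *m v))
  (c : R) (j : 'I_n.+1) :
  P (c *: delta_mx j 0) -> forall k : 'I_n.+1, P ((c * q ^+ k) *: delta_mx k 0).
Proof.
move=> Pj.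
have D : forall m, (m <= j)%N -> P (c *: delta_mx (inord (j - m)) 0).
  elim => [|m IH] Hm; first by rewrite subn0 inord_val.
  have := HT (inord (j - m.+1)) _ (IH (ltnW Hm)).
  rewrite -scalemxAr TmI_e T_sup; last by move: (ltn_ord j) => Hj; rewrite !inordK; lia.
  have -> : (inord (j - m.+1) == inord (j - m) :> 'I_n.+1) = false.
    by move: (ltn_ord j) => Hj; apply/negbTE; rewrite -val_eqE /= !inordK; lia.
  by rewrite subr0 scale1r.
have Up : forall k (Hk : (k < n.+1)%N), P ((c * q ^+ k) *: delta_mx (inord k) 0).
  elim => [|k IH] Hk.
    by rewrite expr0 mulr1; have := D j (leqnn _); rewrite subnn.
  have := HT (inord k.+1) _ (IH (ltnW Hk)).
  rewrite -scalemxAr TmI_e T_sub; last by rewrite !inordK //; lia.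
  have -> : (inord k.+1 == inord k :> 'I_n.+1) = false.
    by apply/negbTE; rewrite -val_eqE /= !inordK //; lia.
  by rewrite subr0 scalerA exprS (mulrC q) mulrA.
by move=> k; have := Up k (ltn_ord k); rewrite inord_val.
Qed.
Section Ev.
Variables (d : nat) (z : algC).
Hypothesis zP : d.-primitive_root z.

Lemma d_gt0 : (0 < d)%N. Proof. exact: prim_order_gt0 zP. Qed.

Lemma mkPhi : mk_monic ('Phi_d : {poly int}) = 'Phi_d.
Proof.
by rewrite /mk_monic size_Cyclotomic ltnS totient_gt0 d_gt0 Cyclotomic_monic.
Qed.

Definition ev (a : Aring d) : algC := let _ := zP in (map_poly intr (a : {poly int})).[z].

Lemma Phi_z : (map_poly intr ('Phi_d : {poly int}) : {poly algC}).[z] = 0.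
Proof. by rewrite (Cintr_Cyclotomic zP); apply/rootP; rewrite root_cyclotomic. Qed.

Lemma ev_in_qpoly (p : {poly int}) :
  ev (in_qpoly ('Phi_d : {poly int}) p) = (map_poly intr p).[z].
Proof.
rewrite /ev /=.
have mon := monic_mk_monic ('Phi_d : {poly int}).
rewrite {2}(Pdiv.RingMonic.rdivp_eq mon p) rmorphD rmorphM /= hornerD hornerM.
by rewrite mkPhi Phi_z mulr0 add0r.
Qed.

Lemma ev_is_zmod : zmod_morphism ev.
Proof. by move=> a b; rewrite /ev /= !rmorphB /= hornerD hornerN. Qed.

Lemma ev_is_monoid : monoid_morphism ev.
Proof.
split.
  by rewrite /ev /= rmorph1 hornerC.
move=> a b.
have -> : a * b = in_qpoly ('Phi_d : {poly int}) ((a : {poly int}) * b) by [].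
by rewrite ev_in_qpoly rmorphM hornerM.
Qed.

HB.instance Definition _ := GRing.isZmodMorphism.Build (Aring d) algC ev ev_is_zmod.
HB.instance Definition _ := GRing.isMonoidMorphism.Build (Aring d) algC ev ev_is_monoid.

Lemma ev_inj : injective ev.
Proof.
apply: raddf_inj => a Ha.
have [p [Dp mp] Hp] := minCpolyP z.
have Hr : root (map_poly ratr (map_poly intr (a : {poly int}))) z.
  rewrite -map_poly_comp.
  have -> : map_poly (ratr \o intr) (a : {poly int}) = map_poly intr (a : {poly int}) :> {poly algC}.
    by apply: eq_map_poly => x /=; rewrite rmorph_int.
  exact/eqP.
rewrite Hp in Hr.
have Ep : p = map_poly intr ('Phi_d : {poly int}).
  apply: (@map_inj_poly _ _ (ratr : rat -> algC)); first exact: fmorph_inj.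
    by rewrite rmorph0.
  rewrite -Dp (minCpoly_cyclotomic zP) -(Cintr_Cyclotomic zP) -map_poly_comp.
  by apply: eq_map_poly => x /=; rewrite rmorph_int.
apply: val_inj => /=.
have Hs : (size (a : {poly int}) < size ('Phi_d : {poly int}))%N.
  by move: (size_mk_monic a); move: (a : {poly int}) => pa; rewrite mkPhi.
have Hsz : size (map_poly intr (a : {poly int}) : {poly rat}) = size (a : {poly int}).
  by apply: size_map_inj_poly; [exact: intr_inj | rewrite rmorph0].
apply/eqP; rewrite -size_poly_eq0 -Hsz size_poly_eq0.
apply/negPn/negP => H0.
have := dvdp_leq H0 Hr; rewrite Ep Hsz size_map_inj_poly; first by rewrite leqNgt Hs.
  exact: intr_inj.
by rewrite rmorph0.
Qed.
End Ev.

Lemma map_burauT (R S : comNzRingType) (f : {rmorphism R -> S}) n (q : R) (j : 'I_n) :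
  map_mx f (burauT q j) = burauT (f q) j.
Proof.
apply/matrixP => i k; rewrite !mxE.
by repeat case: ifP => _; rewrite ?rmorphN ?rmorph1 ?rmorph0.
Qed.

Lemma Gamma_T d n (j : 'I_n) : Gamma (rhoT d j).
Proof. by rewrite -[rhoT d j]mulmx1; apply: GammaT; apply: Gamma1. Qed.

Lemma sumz_ne0 (d n : nat) (z : algC) : d.-primitive_root z -> ~~ (d %| n.+1)%N ->
  \sum_(i < n.+1) z ^+ i != 0.
Proof.
move=> zP nd; apply/eqP => S0.
have : z ^+ n.+1 - 1 = 0 by rewrite subrX1 S0 mulr0.
move/eqP; rewrite subr_eq0 -(prim_order_dvd zP) => H.
by rewrite H in nd.
Qed.

Lemma z_ne0 (d : nat) (z : algC) : d.-primitive_root z -> z != 0.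
Proof.
move=> zP; apply/eqP => z0; have := prim_expr_order zP.
by rewrite z0 expr0n gtn_eqF ?(prim_order_gt0 zP) // => /eqP; rewrite eq_sym oner_eq0.
Qed.

Lemma ev_qA d (z : algC) (zP : d.-primitive_root z) : ev zP (qA d) = z.
Proof. by rewrite /qA ev_in_qpoly // map_polyX hornerX. Qed.

Lemma sumqA_ne0 d n (z : algC) (zP : d.-primitive_root z) : ~~ (d %| n.+1)%N ->
  \sum_(i < n.+1) (qA d) ^+ i != 0.
Proof.
move=> nd; apply/eqP => S0.
have := sumz_ne0 zP nd; rewrite -(ev_qA zP).
have -> : \sum_(i < n.+1) (ev zP (qA d)) ^+ i = ev zP (\sum_(i < n.+1) (qA d) ^+ i).
  by rewrite rmorph_sum; apply: eq_bigr => i _; rewrite rmorphXn.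
by rewrite S0 rmorph0 eqxx.
Qed.

Lemma partb (d n : nat) : (3 <= d)%N -> ~~ (d %| n.+1)%N ->
  (forall (F : fieldType) (f : {rmorphism Aring d -> F}), injective f ->
    forall WF : {vspace 'cV[F]_n}, WF != 0%VS ->
      (forall g w, @Gamma d n g -> w \in WF -> map_mx f g *m w \in WF) ->
      WF = fullv).
Proof.
move=> d3 nd F f finj WF WF0 HG.
have [z zP] := C_prim_root_exists (ltnW (ltnW d3)).
have f0 : forall x, f x = 0 -> x = 0 by move=> x fx; apply: finj; rewrite fx rmorph0.
case: n nd WF WF0 HG => [|n] nd WF WF0 HG.
  by apply/vspaceP => v; rewrite memvf (_ : v = 0) ?mem0v // [v]flatmx0.
set qF := f (qA d).
have HT : forall (j : 'I_n.+1) v, v \in WF -> (burauT qF j - 1) *m v \in WF.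
  move=> j v Hv; rewrite mulmxBl mul1mx memvB //.
  by rewrite -map_burauT; apply: HG => //; apply: Gamma_T.
set w := vpick WF.
have Hw : w \in WF := memv_pick WF.
have w0 : w != 0 by rewrite vpick0.
have [j Hj] : exists j : 'I_n.+1, ((burauT qF j - 1) *m w) j 0 != 0.
  case: (boolP [exists j, ((burauT qF j - 1) *m w) j 0 != 0]) => [/existsP //|/existsPn H].
  exfalso; move/negP: w0; apply; apply/eqP; apply: (@phi_inj _ _ qF).
    by move=> j; apply/eqP; move: (H j); rewrite negbK.
  apply/negP => /eqP S0; have := sumqA_ne0 zP nd.
  rewrite (f0 (\sum_(i < n.+2) (qA d) ^+ i)) ?eqxx //.
  by rewrite rmorph_sum -[RHS]S0; apply: eq_bigr => i _; rewrite rmorphXn.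
have qF0 : qF != 0.
  apply/negP => /eqP /f0 q0; have := z_ne0 zP; rewrite -(ev_qA zP) q0 rmorph0 eqxx //.
have Hc := HT j w Hw; rewrite TmI_row in Hc.
have Hall := spread HT Hc.
have He : forall k : 'I_n.+1, delta_mx k 0 \in WF.
  move=> k; have := memvZ ((((burauT qF j - 1) *m w) j 0 * qF ^+ k)^-1) (Hall k).
  by rewrite scalerA mulVf ?scale1r // mulf_neq0 // expf_neq0.
apply/vspaceP => v; rewrite memvf (matrix_sum_delta v).
apply: memv_suml => i _; apply: memv_suml => l _; rewrite (ord1 l).
exact: memvZ.
Qed.

Lemma coef_extract d (z : algC) (zP : d.-primitive_root z) (x : Aring d) (P : {poly int}) :
  x != 0 -> P != 0 -> (map_poly intr P : {poly Aring d}).[x] = 0 ->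
  exists k, exists r : Aring d, P`_k != 0 /\ (P`_k)%:~R = x * r.
Proof.
move=> Hx; elim/poly_ind: P => [|P c IH] HP H0; first by rewrite eqxx in HP.
move: H0; rewrite rmorphD rmorphM /= map_polyX map_polyC /= hornerD hornerM hornerX hornerC.
case: (eqVneq c 0) => [c0|c0] H0.
  have HP' : P != 0 by apply: contraNneq HP => ->; rewrite c0 mul0r addr0.
  have HPx : (map_poly intr P : {poly Aring d}).[x] = 0.
    apply: (@ev_inj _ _ zP); rewrite rmorph0; apply/eqP.
    have := congr1 (ev zP) H0; rewrite c0 mulr0z addr0 rmorphM rmorph0 /= => /eqP.
    by rewrite mulf_eq0 => /orP [//|]; rewrite -(rmorph0 (ev zP)) (inj_eq (@ev_inj _ _ zP)) (negbTE Hx).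
  have [k [r [Hk Hr]]] := IH HP' HPx.
  by exists k.+1, r; rewrite coefD coefMX coefC /= addr0.
exists 0%N, (- (map_poly intr P : {poly Aring d}).[x]).
rewrite coefD coefMX coefC /= add0r; split => //.
by apply/eqP; rewrite mulrN mulrC -subr_eq0 opprK addrC H0.
Qed.

Lemma N_exists d (z : algC) (zP : d.-primitive_root z) (lam : Aring d) :
  lam != 0 -> exists2 N : int, N != 0 & exists r : Aring d, N%:~R = lam * r.
Proof.
move=> Hl.
have Ha : ev zP lam \in Aint.
  rewrite /ev /=; apply: rpred_horner; last exact: Aint_prim_root zP.
  by apply/polyOverP => i; rewrite coef_map /=; exact: Aint_int.
have HP : minCpoly (ev zP lam) \is a polyOver Num.int := Ha.
have [Pz EP] := floorpP HP.
have Pz0 : Pz != 0.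
  by apply/eqP => P0; have := minCpoly_eq0 (ev zP lam); rewrite EP P0 rmorph0 eqxx.
have HA : (map_poly intr Pz : {poly Aring d}).[lam] = 0.
  apply: (@ev_inj _ _ zP); rewrite rmorph0 -horner_map /= -map_poly_comp.
  rewrite (eq_map_poly (g := intr)); last by move=> c /=; rewrite rmorph_int.
  by rewrite -EP; apply/rootP; exact: root_minCpoly.
have [k [r [Hk Hr]]] := coef_extract zP Hl Pz0 HA.
by exists Pz`_k => //; exists r.
Qed.

Lemma qpoly_val d (a : Aring d) : in_qpoly ('Phi_d : {poly int}) (a : {poly int}) = a.
Proof. by apply: val_inj; exact: (in_qpoly_small (size_mk_monic a)). Qed.

Lemma inq_int d (c : int) : in_qpoly ('Phi_d : {poly int}) (c%:P) = c%:~R :> Aring d.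
Proof.
rewrite -{1}[c]intz polyCMz raddfMz polyC1; congr (_ *~ _); exact: in_qpoly1.
Qed.

Section PartA.
Variables (d n : nat) (W : {pred 'cV[Aring d]_n}).
Hypotheses (W0 : 0 \in W) (WB : forall x y, x \in W -> y \in W -> x - y \in W)
  (HG : forall g w, @Gamma d n g -> w \in W -> g *m w \in W).

Lemma WN x : x \in W -> - x \in W.
Proof. by move=> Hx; rewrite -sub0r WB. Qed.

Lemma WD x y : x \in W -> y \in W -> x + y \in W.
Proof. by move=> Hx Hy; rewrite -[y]opprK WB // WN. Qed.

Lemma WMn x m : x \in W -> x *+ m \in W.
Proof. by move=> Hx; elim: m => [|m IH]; rewrite ?mulr0n // mulrS WD. Qed.

Lemma WMz x (c : int) : x \in W -> x *~ c \in W.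
Proof.
move=> Hx; case: c => m; first exact: WMn.
by rewrite NegzE mulrNz WN // WMn.
Qed.

Lemma Wsum (I : Type) (r : seq I) (F : I -> 'cV[Aring d]_n) :
  (forall i, F i \in W) -> \sum_(i <- r) F i \in W.
Proof. by move=> HF; apply: (big_ind (fun x => x \in W)) => //; exact: WD. Qed.

Lemma HTA (j : 'I_n) v : v \in W -> (burauT (qA d) j - 1) *m v \in W.
Proof.
move=> Hv; rewrite mulmxBl mul1mx WB //.
by apply: HG => //; exact: Gamma_T.
Qed.

Lemma Ideal (k : 'I_n) (b a : Aring d) :
  a *: delta_mx k 0 \in W -> (b * a) *: delta_mx k 0 \in W.
Proof.
move=> Ha.
have Hq : forall a, a *: delta_mx k 0 \in W -> (qA d * a) *: delta_mx k 0 \in W.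
  move=> a' Ha'; have := HG (Gamma_T d k) Ha'.
  rewrite -scalemxAr T_e_self scalerA => H.
  rewrite -[qA d * a']opprK scaleNr WN //.
  by rewrite mulrC -mulrN.
have Hz : forall (c : int) a, a *: delta_mx k 0 \in W -> (c%:~R * a) *: delta_mx k 0 \in W.
  by move=> c a' Ha'; rewrite mulrzl -scalerMzl WMz.
rewrite -[b]qpoly_val.
elim/poly_ind: (b : {poly int}) a Ha => [|P c IH] a' Ha'.
  by rewrite rmorph0 mul0r scale0r.
rewrite rmorphD rmorphM /= inq_int mulrDl scalerDl WD //; last exact: Hz.
by rewrite -mulrA; apply: IH; apply: Hq.
Qed.
End PartA.

Lemma res_lt (N x : int) : N != 0 -> (absz (x %% N)%Z < absz N)%N.
Proof.
move=> N0; have H1 := ltz_mod x N0; have H2 := modz_ge0 x N0.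
by rewrite -ltz_nat; lia.
Qed.

Lemma parta (d n : nat) : (3 <= d)%N -> ~~ (d %| n.+1)%N ->
  (forall W : {pred 'cV[Aring d]_n},
      0 \in W -> (forall x y, x \in W -> y \in W -> x - y \in W) ->
      (exists2 w, w \in W & w != 0) ->
      (forall g w, @Gamma d n g -> w \in W -> g *m w \in W) ->
      (exists2 lam : Aring d, lam != 0 & forall v : 'cV[Aring d]_n, lam *: v \in W)
      /\ (exists s : seq 'cV[Aring d]_n,
            forall v : 'cV[Aring d]_n, exists2 r, r \in s & v - r \in W)).
Proof.
move=> d3 nd W W0 WB [w Hw w0] HG.
have [z zP] := C_prim_root_exists (ltnW (ltnW d3)).
case: n nd W W0 WB w Hw w0 HG => [|n] nd W W0 WB w Hw w0 HG.
  by move: w0; rewrite [w]flatmx0 eqxx.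
have [j Hj] : exists j : 'I_n.+1, ((burauT (qA d) j - 1) *m w) j 0 != 0.
  case: (boolP [exists j, ((burauT (qA d) j - 1) *m w) j 0 != 0]) => [/existsP //|/existsPn H].
  exfalso; move/negP: w0; apply; apply/eqP.
  have : map_mx (ev zP) w = 0.
    apply: (@phi_inj _ _ z); last exact: sumz_ne0 zP nd.
    move=> k; move: (H k); rewrite negbK => /eqP Hk.
    have -> : burauT z k = map_mx (ev zP) (burauT (qA d) k) by rewrite map_burauT /= ev_qA.
    rewrite mulmxBl mul1mx -map_mxM !mxE -rmorphB /=.
    by rewrite mulmxBl mul1mx !mxE in Hk; rewrite Hk rmorph0.
  move/matrixP => Hm; apply/matrixP => i l; have := Hm i l; rewrite !mxE.
  by rewrite -(rmorph0 (ev zP)) => /(@ev_inj _ _ zP).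
set c := ((burauT (qA d) j - 1) *m w) j 0.
have Hc := HTA WB HG j Hw; rewrite TmI_row -/c in Hc.
have Hall := spread (P := fun v => v \in W) (HTA WB HG) Hc.
set lam := c * qA d ^+ n.+1.
have lam0 : lam != 0.
  apply/eqP => /(congr1 (ev zP)); rewrite rmorphM rmorphXn /= ev_qA rmorph0 => /eqP.
  rewrite mulf_eq0 expf_eq0 (negbTE (z_ne0 zP)) andbF orbF.
  by rewrite -(rmorph0 (ev zP)) (inj_eq (@ev_inj _ _ zP)) (negbTE Hj).
have Hlk : forall k : 'I_n.+1, lam *: delta_mx k 0 \in W.
  move=> k; have -> : lam = qA d ^+ (n.+1 - k) * (c * qA d ^+ k).
    by rewrite /lam mulrCA -exprD subnK // ltnW.
  exact: Ideal.
have Hlv : forall v : 'cV[Aring d]_n.+1, lam *: v \in W.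
  move=> v; rewrite [v]matrix_sum_delta scaler_sumr; apply: Wsum => // i.
  rewrite scaler_sumr; apply: Wsum => // l; rewrite (ord1 l) scalerA mulrC.
  exact: Ideal.
split; first by exists lam.
have [N N0 [r Hr]] := N_exists zP lam0.
pose m := size ('Phi_d : {poly int}).
pose K := absz N.
pose T := {ffun 'I_n.+1 -> {ffun 'I_m -> 'I_K}}.
pose R (t : T) : 'cV[Aring d]_n.+1 :=
  \col_k in_qpoly ('Phi_d : {poly int}) (\poly_(i < m) (oapp (fun i' : 'I_m => ((t k i' : nat)%:Z)) 0 (insub i))).
exists (codom R) => v.
pose t : T := [ffun k => [ffun i : 'I_m => Ordinal (res_lt ((v k 0 : {poly int})`_i) N0)]].
exists (R t); first exact: codom_f.
pose u : 'cV[Aring d]_n.+1 :=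
  \col_k in_qpoly ('Phi_d : {poly int}) (\poly_(i < m) (((v k 0 : {poly int})`_i %/ N)%Z)).
have -> : v - R t = lam *: (r *: u).
  rewrite scalerA -Hr; apply/matrixP => k l; rewrite (ord1 l) !mxE.
  rewrite -{1}[v k 0]qpoly_val -inq_int -rmorphB -rmorphM; congr (in_qpoly _ _).
  apply/polyP => i; rewrite coefB coefCM !coef_poly.
  case: ifP => Hi.
    rewrite (insubT (fun i => i < m)%N Hi) /= !ffunE /= gez0_abs ?modz_ge0 //.
    by rewrite {1}(divz_eq ((v k 0 : {poly int})`_i) N) addrK mulrC.
  rewrite mulr0 subr0 nth_default //.
  move: (size_mk_monic (v k 0)); move: (v k 0 : {poly int}) => pa.
  rewrite (mkPhi zP) -/m => Hs.
  by rewrite leqNgt; apply/negP => H; have := leq_trans H (ltnW Hs); rewrite Hi.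
exact: Hlv.
Qed.

Unset Implicit Arguments.

Theorem lemma4p3 (d n : nat) :
  (3 <= d)%N -> ~~ (d %| n.+1)%N ->
  (* (a) *)
  (forall W : {pred 'cV[Aring d]_n},
      0 \in W -> (forall x y, x \in W -> y \in W -> x - y \in W) ->
      (exists2 w, w \in W & w != 0) ->
      (forall g w, @Gamma d n g -> w \in W -> g *m w \in W) ->
      (exists2 lam : Aring d, lam != 0 & forall v : 'cV[Aring d]_n, lam *: v \in W)
      /\ (exists s : seq 'cV[Aring d]_n,
            forall v : 'cV[Aring d]_n, exists2 r, r \in s & v - r \in W))
  /\
  (* (b) *)
  (forall (F : fieldType) (f : {rmorphism Aring d -> F}), injective f ->
    forall WF : {vspace 'cV[F]_n}, WF != 0%VS ->
      (forall g w, @Gamma d n g -> w \in WF -> map_mx f g *m w \in WF) ->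
      WF = fullv).
Proof.
move=> d3 nd; split; [exact: parta | exact: partb].
Qed.
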